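(* Consider the faulty-starter delivery problem described in the context, with finisher starting position $(x,y)\neq(0,0)$, $y\ge0$. The hybrid algorithm $\mathcal{H}$ described in the context is optimal: for every online algorithm $\mathcal{A}$, $\mathrm{CR}_{\mathcal{H}}\le\mathrm{CR}_{\mathcal{A}}$.
   Context: Setting. In the plane let $S=(0,0)$ and $T=(1,0)$. A ''starter'' drone carrying a package starts at $S$ at time $0$ and moves at unit speed along $\overline{ST}$ towards $T$. At an unknown time $t\in[0,1]$ it fails and stays forever at $(t,0)$ with the package (at time $s$ the package is at $(\min\{s,t\},0)$). A ''finisher'' drone starts at time $0$ at $P=(x,y)$ with $y\ge0$, moves at unit speed and can stop and turn instantaneously. The package can be handed over only when the drones are co-located; it is delivered at the first time the finisher, carrying the package, is at $T$. An online algorithm $\mathcal{A}$ specifies the finisher's trajectory using only $(x,y)$ (not $t$); $A(t)$ is its delivery time for fail time $t$. $\mathrm{Opt}(t)=\max\{1,\sqrt{(x-t)^2+y^2}+1-t\}$ is the optimal offline delivery time. $\mathrm{CR}_{\mathcal{A}}(t)=A(t)/\mathrm{Opt}(t)$ and $\mathrm{CR}_{\mathcal{A}}=\sup_{0\le t\le1}\mathrm{CR}_{\mathcal{A}}(t)$. Candidate algorithms. $\mathcal{A}_0$: the finisher goes straight to $S$, then along $\overline{ST}$ towards $T$ until it finds the package, then on to $T$. $\mathcal{A}_1$: the finisher goes straight to $T$, then along the segment towards $S$ until it finds the package, then returns to $T$. $\mathcal{A}_d$ (for $x>0$): with $d=(x^2+y^2)/(2x)$, the finisher goes straight to $(d,0)$,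 then towards $S$ along the segment until it finds the package, then goes to $T$. Hybrid algorithm $\mathcal{H}$: if $(x-1)^2+y^2>1$, execute $\mathcal{A}_0$ if $\mathrm{CR}_{\mathcal{A}_0}\le\mathrm{CR}_{\mathcal{A}_1}$ and $\mathcal{A}_1$ otherwise; if $(x-1)^2+y^2\le1$, execute $\mathcal{A}_0$ if $\mathrm{CR}_{\mathcal{A}_0}\le\mathrm{CR}_{\mathcal{A}_d}$ and $\mathcal{A}_d$ otherwise. *)

(* Defs.v *)
From HB Require Import structures.
From mathcomp Require Import all_boot all_order all_algebra.
From mathcomp Require Import all_classical all_reals all_analysis.
Set Implicit Arguments. Unset Strict Implicit. Unset Printing Implicit Defensive.
Import Order.TTheory GRing.Theory Num.Theory.
Local Open Scope ring_scope.
Local Open Scope classical_set_scope.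

Section FaultyStarter.
Variable R : realType.

Definition pt := (R * R)%type.

Definition dist (p q : pt) : R :=
  Num.sqrt ((p.1 - q.1) ^+ 2 + (p.2 - q.2) ^+ 2).

Definition ptS : pt := (0, 0).
Definition ptT : pt := (1, 0).

(* position of the package at time s when the starter fails at time t *)
Definition pkg (t s : R) : pt := (Num.min s t, 0).

Definition unit_speed (f : R -> pt) : Prop :=
  forall s1 s2, 0 <= s1 -> 0 <= s2 -> dist (f s1) (f s2) <= `|s1 - s2|.

(* An online algorithm: a search trajectory followed until the package is
   found (independent of t), and, for each pick-up time tau, the trajectory
   followed afterwards ([after tau r] = position at time tau + r).  The only
   information gained before delivery is the pick-up time (and hence the
   pick-up position [search tau]). *)
Record online_alg := OnlineAlg {
  search : R -> pt;
  after : R -> R -> pt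
}.

Definition valid_alg (P : pt) (A : online_alg) : Prop :=
  search A 0 = P /\ unit_speed (search A) /\
  forall tau, 0 <= tau -> after A tau 0 = search A tau /\ unit_speed (after A tau).

Definition is_pickup (g : R -> pt) (t s : R) : Prop :=
  [/\ 0 <= s, g s = pkg t s &
      forall s', 0 <= s' -> g s' = pkg t s' -> s <= s'].

(* delivery time A(t): first time after pick-up at which the finisher is at T;
   +oo if the package is never picked up or never delivered *)
Definition delivery (A : online_alg) (t : R) : \bar R :=
  ereal_inf [set e | exists s r, [/\ is_pickup (search A) t s, 0 <= r,
                                    after A s r = ptT & e = (s + r)%:E]].

Definition Opt (P : pt) (t : R) : R := Num.max 1 (dist P (t, 0) + 1 - t).

Definition cr (P : pt) (A : online_alg) : \bar R :=
  ereal_sup [set (delivery A t * ((Opt P t)^-1)%:E)%E | t in [set t : R | 0 <= t <= 1]].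

Definition seg (p q : pt) (r : R) : pt :=
  if r <= dist p q then
    (p.1 + r / dist p q * (q.1 - p.1), p.2 + r / dist p q * (q.2 - p.2))
  else q.

Definition leg2 (p q z : pt) (s : R) : pt :=
  if s <= dist p q then seg p q s else seg q z (s - dist p q).

Definition to_T (g : R -> pt) : R -> R -> pt := fun tau r => seg (g tau) ptT r.

Definition alg0 (P : pt) : online_alg :=
  OnlineAlg (leg2 P ptS ptT) (to_T (leg2 P ptS ptT)).
Definition alg1 (P : pt) : online_alg :=
  OnlineAlg (leg2 P ptT ptS) (to_T (leg2 P ptT ptS)).
Definition dpoint (P : pt) : R := (P.1 ^+ 2 + P.2 ^+ 2) / (2 * P.1).
Definition algd (P : pt) : online_alg :=
  OnlineAlg (leg2 P (dpoint P, 0) ptS) (to_T (leg2 P (dpoint P, 0) ptS)).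

Definition hybrid (P : pt) : online_alg :=
  if 1 < (P.1 - 1) ^+ 2 + P.2 ^+ 2 then
    (if (cr P (alg0 P) <= cr P (alg1 P))%E then alg0 P else alg1 P)
  else
    (if (cr P (alg0 P) <= cr P (algd P))%E then alg0 P else algd P).

End FaultyStarter.

(* Main.v *)
Require Import Defs.
From HB Require Import structures.
From mathcomp Require Import all_boot all_order all_algebra.
From mathcomp Require Import all_classical all_reals all_analysis.
From mathcomp Require Import ring lra.
Import Order.TTheory GRing.Theory Num.Theory.
Local Open Scope ring_scope.
Set Implicit Arguments.
Unset Strict Implicit.

Section Aux.
Variable R : realType.
Implicit Types p q r : pt R.

Lemma distP p q : 0 <= dist p q /\
  dist p q ^+ 2 = (p.1 - q.1) ^+ 2 + (p.2 - q.2) ^+ 2.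
Proof.
split; first exact: sqrtr_ge0.
by rewrite /dist sqr_sqrtr // addr_ge0 // sqr_ge0.
Qed.

Lemma dist_le p q e : 0 <= e ->
  (p.1 - q.1) ^+ 2 + (p.2 - q.2) ^+ 2 <= e ^+ 2 -> dist p q <= e.
Proof. move=> e0 h; have [h1 h2] := distP p q; nra. Qed.

Lemma dist_ge p q e :
  e ^+ 2 <= (p.1 - q.1) ^+ 2 + (p.2 - q.2) ^+ 2 -> e <= dist p q.
Proof. move=> h; have [h1 h2] := distP p q; nra. Qed.

Lemma dist_sym p q : dist p q = dist q p.
Proof. by rewrite /dist -(sqrrN (p.1 - q.1)) -(sqrrN (p.2 - q.2)) !opprB. Qed.

Lemma dist_ge0 p q : 0 <= dist p q.
Proof. exact: sqrtr_ge0. Qed.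

Lemma dist_tri p q r : dist p r <= dist p q + dist q r.
Proof.
have [a0 a2] := distP p q; have [b0 b2] := distP q r.
apply: dist_le; first by rewrite addr_ge0.
set u1 := p.1 - q.1; set u2 := p.2 - q.2; set v1 := q.1 - r.1; set v2 := q.2 - r.2.
have -> : p.1 - r.1 = u1 + v1 by rewrite /u1 /v1; ring.
have -> : p.2 - r.2 = u2 + v2 by rewrite /u2 /v2; ring.
have hab : 0 <= dist p q * dist q r by rewrite mulr_ge0.
have hsq : (u1 * v1 + u2 * v2) ^+ 2 <= (dist p q * dist q r) ^+ 2.
  rewrite exprMn a2 b2 -/u1 -/u2 -/v1 -/v2.
  have := sqr_ge0 (u1 * v2 - u2 * v1); nra.
have huv : u1 * v1 + u2 * v2 <= dist p q * dist q r by nra.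
rewrite -/u1 -/u2 -/v1 -/v2 in a2 b2; nra.
Qed.

Lemma dist_axis (a b : R) : dist (a, 0) (b, 0) = `|a - b|.
Proof. by rewrite /dist /= subrr expr0n /= addr0 sqrtr_sqr. Qed.

Lemma dist_eq0 p q : dist p q = 0 -> p = q.
Proof.
move=> h; have [_ h2] := distP p q; rewrite h expr0n /= in h2.
have h3 := sqr_ge0 (p.1 - q.1); have h4 := sqr_ge0 (p.2 - q.2).
have e1 : p.1 = q.1 by nra.
have e2 : p.2 = q.2 by nra.
by case: p q e1 e2 {h h2 h3 h4} => a b [c d] /= -> ->.
Qed.

Lemma dist_self p : dist p p = 0.
Proof. by rewrite /dist !subrr expr0n /= addr0 sqrtr0. Qed.

End Aux.

Section Aux2.
Variable R : realType.
Implicit Types p q : pt R.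
Local Open Scope classical_set_scope.

Lemma normBr {a b : R} : a <= b -> `|a - b| = b - a.
Proof. by move=> h; rewrite ler0_norm ?opprB // subr_le0. Qed.

Lemma normBl {a b : R} : b <= a -> `|a - b| = a - b.
Proof. by move=> h; rewrite ger0_norm // subr_ge0. Qed.

Lemma norm_le (u v : R) : u <= v -> - u <= v -> `|u| <= v.
Proof. by move=> h1 h2; have [h|h] := lerP 0 u; [rewrite ger0_norm|rewrite ltr0_norm]. Qed.

Lemma min_lip (a b t : R) : `|Num.min a t - Num.min b t| <= `|a - b|.
Proof.
have [ab|ab] := lerP a b.
  rewrite ?(normBr ab); apply: norm_le.
    by case: (lerP a t) => h1; case: (lerP b t) => h2;
      rewrite ?(min_l h1) ?(min_r (ltW h1)) ?(min_l h2) ?(min_r (ltW h2)); lra.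
  by case: (lerP a t) => h1; case: (lerP b t) => h2;
      rewrite ?(min_l h1) ?(min_r (ltW h1)) ?(min_l h2) ?(min_r (ltW h2)); lra.
rewrite ?(normBl (ltW ab)); apply: norm_le.
  by case: (lerP a t) => h1; case: (lerP b t) => h2;
    rewrite ?(min_l h1) ?(min_r (ltW h1)) ?(min_l h2) ?(min_r (ltW h2)); lra.
by case: (lerP a t) => h1; case: (lerP b t) => h2;
  rewrite ?(min_l h1) ?(min_r (ltW h1)) ?(min_l h2) ?(min_r (ltW h2)); lra.
Qed.

Lemma pkg_lip (t a b : R) : dist (pkg t a) (pkg t b) <= `|a - b|.
Proof. by rewrite /pkg dist_axis; exact: min_lip. Qed.

Lemma exists_pickup (g : R -> pt R) (t s0 : R) :
  (forall s1 s2, 0 <= s1 -> 0 <= s2 -> dist (g s1) (g s2) <= `|s1 - s2|) ->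
  0 <= s0 -> g s0 = pkg t s0 -> exists2 s, is_pickup g t s & s <= s0.
Proof.
move=> lip s00 gs0.
pose C := [set s : R | 0 <= s /\ g s = pkg t s].
have C0 : C !=set0 by exists s0.
have lbC : lbound C 0 by move=> s [].
have hinf : has_inf C by split => //; exists 0.
set m := inf C.
have m0 : 0 <= m by exact: lb_le_inf.
have mle : forall s, C s -> m <= s by move=> s Cs; exact: (ge_inf (proj2 hinf)).
have gm : g m = pkg t m.
  apply: dist_eq0; apply/eqP; rewrite eq_le dist_ge0 andbT.
  apply/ler_addgt0Pr => e e0.
  have e2 : 0 < e / 2 by rewrite divr_gt0.
  have [s [s0' gs] slt] := inf_adherent e2 hinf.
  rewrite -/m in slt.
  have ms : m <= s by exact: mle.
  have h1 := lip m s m0 s0'.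
  have h2 := pkg_lip t s m.
  rewrite (normBr ms) in h1; rewrite (normBl ms) in h2.
  have t1 := dist_tri (g m) (g s) (pkg t m).
  rewrite gs in t1 h1.
  lra.
exists m; last exact: mle (conj s00 gs0).
split => // s' s'0 gs'; exact: mle (conj s'0 gs').
Qed.

End Aux2.

Section Ereal.
Variable R : realType.
Local Open Scope classical_set_scope.

Lemma Opt_ge1 (P : pt R) t : 1 <= Opt P t.
Proof. by rewrite /Opt le_max lexx. Qed.

Lemma Opt_gt0 (P : pt R) t : 0 < Opt P t.
Proof. exact: lt_le_trans ltr01 (Opt_ge1 P t). Qed.

Lemma ratio_lb (L O : R) (e : \bar R) : 0 < O -> (L%:E <= e)%E ->
  ((L / O)%:E <= e * (O^-1)%:E)%E.
Proof.
move=> O0 h; rewrite EFinM; apply: lee_wpmul2r => //.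
by rewrite lee_fin invr_ge0 ltW.
Qed.

Lemma ratio_ub (B O : R) (e : \bar R) : 0 < O -> (e <= B%:E)%E ->
  (e * (O^-1)%:E <= (B / O)%:E)%E.
Proof.
move=> O0 h; rewrite EFinM; apply: lee_wpmul2r => //.
by rewrite lee_fin invr_ge0 ltW.
Qed.

Lemma deliv_lb (A : online_alg R) t L :
  (forall s r, is_pickup (search A) t s -> 0 <= r -> after A s r = ptT R ->
     L <= s + r) -> (L%:E <= delivery A t)%E.
Proof.
move=> h; apply: le_ereal_inf_tmp => _ [s [r [hp r0 ha ->]]].
by rewrite lee_fin; exact: h.
Qed.

Lemma deliv_ub (A : online_alg R) t s r :
  is_pickup (search A) t s -> 0 <= r -> after A s r = ptT R ->
  (delivery A t <= (s + r)%:E)%E.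
Proof. by move=> hp r0 ha; apply: ereal_inf_lbound; exists s, r. Qed.

Lemma cr_lb (P : pt R) (A : online_alg R) t : 0 <= t <= 1 ->
  (delivery A t * ((Opt P t)^-1)%:E <= cr P A)%E.
Proof. by move=> ht; apply: ereal_sup_ubound; exists t. Qed.

Lemma cr_ub (P : pt R) (A : online_alg R) (M : \bar R) :
  (forall t, 0 <= t <= 1 -> (delivery A t * ((Opt P t)^-1)%:E <= M)%E) ->
  (cr P A <= M)%E.
Proof. by move=> h; apply: ge_ereal_sup => _ [t ht <-]; exact: h. Qed.

Lemma eps_close (L : R) (c : \bar R) :
  (forall e, 0 < e -> ((L - e)%:E <= c)%E) -> (L%:E <= c)%E.
Proof.
case: c => [r| |] h; last first.
- by move: (h 1 ltr01).
- by rewrite leey.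
rewrite lee_fin; apply/ler_addgt0Pr => e e0.
by have := h e e0; rewrite lee_fin; lra.
Qed.

End Ereal.

Section Geo.
Variables (R : realType) (x y : R).

Definition D (u : R) := dist (x, y) (u, 0).

Lemma D_ge0 u : 0 <= D u.
Proof. exact: dist_ge0. Qed.

Lemma D_sq u : D u ^+ 2 = (x - u) ^+ 2 + y ^+ 2.
Proof. by have [_ ->] := distP (x, y) (u, 0); rewrite /= subr0. Qed.

Lemma D_lip u w : D w <= D u + `|w - u|.
Proof.
have := dist_tri (x, y) (u, 0) (w, 0); rewrite dist_axis /D.
by rewrite distrC.
Qed.

Lemma P_pos (hP : (x, y) != (0, 0)) : 0 < x ^+ 2 + y ^+ 2.
Proof.
have h1 := sqr_ge0 x; have h2 := sqr_ge0 y.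
rewrite lt_neqAle addr_ge0 // andbT; apply/eqP => h.
have ex : x = 0 by nra.
have ey : y = 0 by nra.
by move: hP; rewrite ex ey eqxx.
Qed.

Lemma sq_le_le (a b : R) : 0 <= b -> a ^+ 2 <= b ^+ 2 -> a <= b.
Proof. move=> b0 h; nra. Qed.

Lemma sq_lt_lt (a b : R) : 0 <= b -> a ^+ 2 < b ^+ 2 -> a < b.
Proof. move=> b0 h; nra. Qed.


Lemma out_D (hP : (x, y) != (0, 0)) (hout : 1 < (x - 1) ^+ 2 + y ^+ 2) u : 0 <= u -> u <= 1 -> u < D u.
Proof.
move=> u0 u1; apply: sq_lt_lt; first exact: D_ge0.
rewrite D_sq; have := P_pos hP => pp.
have [x0|x0] := lerP x 0.
  have h : 0 <= - x * u by rewrite mulr_ge0 // oppr_ge0.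
  nra.
have h : 0 <= x * (1 - u) by rewrite mulr_ge0 //; lra.
nra.
Qed.

Lemma out_q1 (hout : 1 < (x - 1) ^+ 2 + y ^+ 2) : 1 < D 1.
Proof. apply: sq_lt_lt; first exact: D_ge0. by rewrite D_sq expr1n. Qed.

Lemma out_mono (hout : 1 < (x - 1) ^+ 2 + y ^+ 2) u t : 0 <= u -> u <= t -> t <= 1 -> (1 - t) * D u <= (1 - u) * D t.
Proof.
move=> u0 ut t1.
have q1 := out_q1 hout; have q0 := D_ge0 1; have q2 := D_sq 1.
set a := 1 - u; set b := 1 - t.
have a0 : 0 <= a by rewrite /a; lra.
have b0 : 0 <= b by rewrite /b; lra.
have ba : b <= a by rewrite /a /b; lra.
have a1 : a <= 1 by rewrite /a; lra.
have hab : 2 * a * b <= a + b by nra.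
have hX : `|x - 1| <= D 1.
  apply: sq_le_le => //; rewrite real_normK ?num_real // q2; nra.
have [hX1 hX2] : - D 1 <= x - 1 /\ x - 1 <= D 1.
  by move: hX; rewrite ler_norml => /andP.
have key : 0 <= (a + b) * ((x - 1) ^+ 2 + y ^+ 2) + 2 * a * b * (x - 1).
  rewrite -q2.
  have k1 : 0 <= D 1 * ((a + b) * D 1 - 2 * a * b) by apply: mulr_ge0; nra.
  have k2 : 0 <= (a * b) * (x - 1 + D 1) by apply: mulr_ge0; [exact: mulr_ge0|lra].
  nra.
apply: sq_le_le; first by apply: mulr_ge0 => //; exact: D_ge0.
rewrite !exprMn !D_sq.
have e1 : x - t = (x - 1) + b by rewrite /b; ring.
have e2 : x - u = (x - 1) + a by rewrite /a; ring.
rewrite e1 e2.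
have k : 0 <= (a - b) * ((a + b) * ((x - 1) ^+ 2 + y ^+ 2) + 2 * a * b * (x - 1)).
  by apply: mulr_ge0 => //; lra.
nra.
Qed.


Lemma in_x (hP : (x, y) != (0, 0)) (hin : (x - 1) ^+ 2 + y ^+ 2 <= 1) : 0 < x.
Proof. have := P_pos hP => pp; nra. Qed.

Notation d := (dpoint (x, y)).

Lemma d_eq (hP : (x, y) != (0, 0)) (hin : (x - 1) ^+ 2 + y ^+ 2 <= 1) :
  2 * x * d = x ^+ 2 + y ^+ 2.
Proof.
have x0 := in_x hP hin; rewrite /dpoint /=.
by rewrite mulrC -mulrA mulVf ?mulr1 //; apply: lt0r_neq0; rewrite mulr_gt0.
Qed.

Lemma d_pos (hP : (x, y) != (0, 0)) (hin : (x - 1) ^+ 2 + y ^+ 2 <= 1) : 0 < d.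
Proof.
have x0 := in_x hP hin; have := d_eq hP hin; have := P_pos hP => pp e; nra.
Qed.

Lemma d_le1 (hP : (x, y) != (0, 0)) (hin : (x - 1) ^+ 2 + y ^+ 2 <= 1) : d <= 1.
Proof. have x0 := in_x hP hin; have := d_eq hP hin => e; nra. Qed.

Lemma D_sq_in (hP : (x, y) != (0, 0)) (hin : (x - 1) ^+ 2 + y ^+ 2 <= 1) u :
  D u ^+ 2 = 2 * x * (d - u) + u ^+ 2.
Proof. rewrite D_sq; have := d_eq hP hin => e; nra. Qed.

Lemma in_Dd (hP : (x, y) != (0, 0)) (hin : (x - 1) ^+ 2 + y ^+ 2 <= 1) : D d = d.
Proof.
have e := D_sq_in hP hin d; rewrite subrr mulr0 add0r in e.
have h0 := D_ge0 d; have h1 := d_pos hP hin; nra.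
Qed.

Lemma in_D_lt (hP : (x, y) != (0, 0)) (hin : (x - 1) ^+ 2 + y ^+ 2 <= 1) u :
  0 <= u -> u < d -> u < D u.
Proof.
move=> u0 ud; apply: sq_lt_lt; first exact: D_ge0.
rewrite (D_sq_in hP hin); have x0 := in_x hP hin.
have k : 0 < x * (d - u) by apply: mulr_gt0 => //; lra.
nra.
Qed.

Lemma in_D_ge (hP : (x, y) != (0, 0)) (hin : (x - 1) ^+ 2 + y ^+ 2 <= 1) u :
  0 <= u -> D u <= u -> d <= u.
Proof.
move=> u0 h; rewrite leNgt; apply/negP => ud.
by have := in_D_lt hP hin u0 ud; lra.
Qed.

Lemma in_mono (hP : (x, y) != (0, 0)) (hin : (x - 1) ^+ 2 + y ^+ 2 <= 1) u t :
  0 <= u -> u <= t -> t <= d -> (d - t) * D u <= (1 - u) * D t.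
Proof.
move=> u0 ut td.
have d1 := d_le1 hP hin; have x0 := in_x hP hin.
apply: sq_le_le; first by apply: mulr_ge0; [lra|exact: D_ge0].
rewrite !exprMn !(D_sq_in hP hin).
set al := d - t; set de := t - u.
have al0 : 0 <= al by rewrite /al; lra.
have de0 : 0 <= de by rewrite /de; lra.
have e1 : d - u = al + de by rewrite /al /de; ring.
have hu : al + de <= 1 - u by rewrite /al /de; lra.
have hsq : (al + de) ^+ 2 <= (1 - u) ^+ 2 by nra.
have k1 : 0 <= (2 * x * (d - t) + t ^+ 2) by nra.
have k2 : (al + de) ^+ 2 * (2 * x * (d - t) + t ^+ 2) <= (1 - u) ^+ 2 * (2 * x * (d - t) + t ^+ 2).
  by apply: ler_wpM2r.
have k3 : al * u <= (al + de) * t by nra.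
have k4 : 0 <= x * al * de * (al + de) by apply: mulr_ge0; [apply: mulr_ge0; [apply: mulr_ge0; lra|]|]; lra.
rewrite e1; rewrite -/al in k2 |- *.
have k6 : 0 <= al * u by apply: mulr_ge0.
have k5 : (al * u) ^+ 2 <= ((al + de) * t) ^+ 2 by nra.
nra.
Qed.

Lemma OptE u : Opt (x, y) u = Num.max 1 (D u + 1 - u).
Proof. by []. Qed.

Lemma Opt_K u : u <= D u -> Opt (x, y) u = D u + 1 - u.
Proof. by move=> h; rewrite OptE max_r //; lra. Qed.

Lemma Opt_ge u : 0 <= u -> u <= 1 -> Num.max 1 (D 1) <= Opt (x, y) u.
Proof.
move=> u0 u1; rewrite OptE; have := D_lip u 1; rewrite normBl // => h.
rewrite ge_max !le_max lexx /=; apply/orP; right; lra.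
Qed.

Lemma Opt1 : Opt (x, y) 1 = Num.max 1 (D 1).
Proof. by rewrite OptE addrK. Qed.

End Geo.

Section LB.
Variables (R : realType) (x y : R) (A : online_alg R).
Hypothesis hv : valid_alg (x, y) A.
Local Notation g := (search A).

Lemma v_lip s1 s2 : 0 <= s1 -> 0 <= s2 -> dist (g s1) (g s2) <= `|s1 - s2|.
Proof. by case: hv => _ [us _]; exact: us. Qed.

Lemma v_start s : 0 <= s -> dist (x, y) (g s) <= s.
Proof.
move=> s0; case: hv => g0 [us _]; have := us 0 s (lexx 0) s0.
by rewrite g0 sub0r normrN ger0_norm.
Qed.

Lemma v_after s r : 0 <= s -> 0 <= r -> after A s r = ptT R -> dist (g s) (ptT R) <= r.
Proof.
move=> s0 r0 ha; case: hv => _ [_ hs]; have [h0 us] := hs s s0.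
by have := us 0 r (lexx 0) r0; rewrite h0 ha sub0r normrN ger0_norm.
Qed.

Lemma deliv_ge t L :
  (forall s, is_pickup g t s -> L <= s + dist (g s) (ptT R)) -> (L%:E <= delivery A t)%E.
Proof.
move=> h; apply: deliv_lb => s r hp r0 ha.
have [s0 _ _] := hp; have := v_after s0 r0 ha; have := h s hp; lra.
Qed.

Lemma pkg_ge (t s : R) : t <= s -> pkg t s = (t, 0).
Proof. by move=> h; rewrite /pkg min_r. Qed.

Lemma pkg_le (t s : R) : s <= t -> pkg t s = (s, 0).
Proof. by move=> h; rewrite /pkg min_l. Qed.

Lemma distT (u : R) : dist (u, 0) (ptT R) = `|u - 1|.
Proof. exact: dist_axis. Qed.

Lemma distT' (u : R) : dist (ptT R) (u, 0) = `|1 - u|.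
Proof. exact: dist_axis. Qed.

Lemma early s1 u s : is_pickup g 1 s1 -> is_pickup g u s -> u <= 1 -> s < u -> s1 <= s.
Proof.
move=> [_ _ m1] [s0 gs _] u1 su; apply: m1 => //.
by rewrite gs (pkg_le (ltW su)) pkg_le //; lra.
Qed.

Lemma pick1_ge1 s1 : is_pickup g 1 s1 -> g s1 = ptT R -> 1 <= s1.
Proof.
move=> [s0 gs _] hT; move: gs; rewrite hT /pkg /ptT => -[e].
rewrite leNgt; apply/negP => h; move: e; rewrite min_l ?ltW // => e; lra.
Qed.

Lemma pick1_pos s1 : is_pickup g 1 s1 -> s1 < 1 -> g s1 = (s1, 0).
Proof. by move=> [s0 gs _] h; rewrite gs pkg_le // ltW. Qed.

Lemma pick_at t s : is_pickup g t s -> t <= s -> g s = (t, 0).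
Proof. by move=> [s0 gs _] h; rewrite gs pkg_ge. Qed.

Lemma T_neq u : u < 1 -> (u, 0) != ptT R.
Proof. by move=> h; apply/negP => /eqP [] e; move: h; rewrite e ltxx. Qed.

Lemma sc_after s1 u s : is_pickup g 1 s1 -> g s1 = ptT R -> 0 <= u -> u < 1 ->
  is_pickup g u s -> (forall s', 0 <= s' -> s' < s1 -> g s' <> (u, 0)) ->
  s1 + 1 - u <= s.
Proof.
move=> hp1 hT u0 u1 hp hV.
have s11 := pick1_ge1 hp1 hT.
have [s0 _ _] := hp; have [s10 _ _] := hp1.
have us : u <= s.
  rewrite leNgt; apply/negP => su; have := early hp1 hp (ltW u1) su; lra.
have gs := pick_at hp us.
have s1s : s1 < s.
  rewrite ltNge; apply/negP; rewrite le_eqVlt => /orP [/eqP e|h].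
    by move: (T_neq u1); rewrite -gs e hT eqxx.
  exact: (hV s s0 h gs).
have := v_lip s10 s0; rewrite hT gs distT' (normBr (ltW s1s)) (normBl (ltW u1)).
lra.
Qed.

Lemma V_bound s1 w s' : g s1 = ptT R -> 0 <= s' -> s' < s1 -> g s' = (w, 0) -> w <= 1 ->
  D x y w + 1 - w <= s1.
Proof.
move=> hT s0 ss gs w1.
have := v_start s0; rewrite gs => h1.
have := v_lip s0 (le_trans s0 (ltW ss)); rewrite gs hT (normBr (ltW ss)) distT (normBr w1).
rewrite /D; lra.
Qed.

Lemma sc0 s1 a : is_pickup g 1 s1 -> g s1 = ptT R -> s1 < D x y 0 + 1 ->
  is_pickup g 0 a -> s1 + 1 <= a.
Proof.
move=> hp1 hT hlt hp; have [a0 _ _] := hp; have [s10 _ _] := hp1.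
have ga := pick_at hp a0.
have := v_start a0; rewrite ga -/(D x y 0) => h1.
have := v_lip a0 s10; rewrite ga hT distT sub0r normrN normr1.
by have [h|h] := lerP a s1; lra.
Qed.

Lemma sc_inter s1 t s : is_pickup g 1 s1 -> s1 < 1 -> 0 <= t -> t < D x y t -> t < s1 ->
  is_pickup g t s -> 2 * s1 - t <= s.
Proof.
move=> hp1 hs1 t0 tD ts hp; have [s0 _ _] := hp; have [s10 _ _] := hp1.
have ts' : t <= s.
  rewrite leNgt; apply/negP => st; have := early hp1 hp (ltW (lt_trans ts hs1)) st; lra.
have gs := pick_at hp ts'.
have g1 := pick1_pos hp1 hs1.
have := v_lip s10 s0; rewrite gs g1 dist_axis (normBl (ltW ts)).
have [h|h] := lerP s s1 => h2.
  have est : s = t by lra.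
  have := v_start s0; rewrite gs est -/(D x y t); lra.
lra.
Qed.

End LB.

Section Paths.
Variable R : realType.
Implicit Types p q z : pt R.

Definition lin p q (al : R) : pt R := (p.1 + al * (q.1 - p.1), p.2 + al * (q.2 - p.2)).

Lemma dist_lin p q al be : dist (lin p q al) (lin p q be) <= `|al - be| * dist p q.
Proof.
have [L0 L2] := distP p q.
apply: dist_le; first by rewrite mulr_ge0.
rewrite /lin /= exprMn L2 real_normK ?num_real //.
have -> : p.1 + al * (q.1 - p.1) - (p.1 + be * (q.1 - p.1)) = (al - be) * (q.1 - p.1) by ring.
have -> : p.2 + al * (q.2 - p.2) - (p.2 + be * (q.2 - p.2)) = (al - be) * (q.2 - p.2) by ring.
rewrite !exprMn -(sqrrN (q.1 - p.1)) -(sqrrN (q.2 - p.2)) !opprB mulrDr.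
exact: lexx.
Qed.

Lemma seg_lin p q r : 0 < dist p q ->
  seg p q r = lin p q (Num.min r (dist p q) / dist p q).
Proof.
move=> L0; rewrite /seg /lin.
have [h|h] := lerP r (dist p q); first by [].
rewrite (divff (lt0r_neq0 L0)) !mul1r.
by case: q {h L0} => a b /=; congr (_, _); ring.
Qed.

Lemma seg_p0 p q r : dist p q = 0 -> seg p q r = p.
Proof.
move=> L0; have pq := dist_eq0 L0; rewrite /seg L0 invr0 !mulr0 !mul0r !addr0.
by case: ifP => _; [case: p {pq L0}|rewrite pq].
Qed.

Lemma seg_lip p q r1 r2 : 0 <= r1 -> 0 <= r2 ->
  dist (seg p q r1) (seg p q r2) <= `|r1 - r2|.
Proof.
move=> r10 r20; have [L0 _] := distP p q.
move: L0; rewrite le_eqVlt => /orP [/eqP L0|L0].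
  by rewrite !seg_p0 // dist_self normr_ge0.
rewrite !seg_lin //; apply: le_trans (dist_lin _ _ _ _) _.
have iL : 0 < (dist p q)^-1 by rewrite invr_gt0.
rewrite -mulrBl normrM (gtr0_norm iL) -mulrA mulVf ?gt_eqF // mulr1.
exact: min_lip.
Qed.

Lemma seg_L p q : seg p q (dist p q) = q.
Proof.
have [L0 _] := distP p q; move: L0; rewrite le_eqVlt => /orP [/eqP L0|L0].
  by rewrite seg_p0 //; apply: dist_eq0.
rewrite seg_lin // min_l // divff ?gt_eqF //; rewrite /lin.
by case: q {L0} => a b /=; congr (_, _); ring.
Qed.

Lemma seg_0 p q : seg p q 0 = p.
Proof.
rewrite /seg; case: ifP => h.
  by rewrite !mul0r !addr0; case: p {h}.
by move: h; rewrite dist_ge0.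
Qed.

Lemma seg_ge p q r : dist p q <= r -> seg p q r = q.
Proof.
move=> h; rewrite /seg; case: ifP => // h2.
have e : r = dist p q by apply/eqP; rewrite eq_le h2.
by rewrite -e -[in RHS](seg_L p q) /seg e lexx.
Qed.

Lemma seg_to_end p q r : 0 <= r -> r <= dist p q -> dist (seg p q r) q <= dist p q - r.
Proof.
move=> r0 rL; rewrite -{2}(seg_L p q).
by have := seg_lip p q r0 (dist_ge0 p q); rewrite normBr.
Qed.

Lemma seg_from_start p q r : 0 <= r -> dist p (seg p q r) <= r.
Proof.
move=> r0; rewrite -{1}(seg_0 p q).
by have := seg_lip p q (lexx 0) r0; rewrite sub0r normrN ger0_norm.
Qed.

Lemma leg2_ge p q z s : dist p q <= s -> leg2 p q z s = seg q z (s - dist p q).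
Proof.
move=> h; rewrite /leg2; case: ifP => // h2.
have e : s = dist p q by apply/eqP; rewrite eq_le h2.
by rewrite e seg_L subrr seg_0.
Qed.

Lemma leg2_le p q z s : s <= dist p q -> leg2 p q z s = seg p q s.
Proof. by move=> h; rewrite /leg2 h. Qed.

Lemma leg2_lip p q z s1 s2 : 0 <= s1 -> 0 <= s2 ->
  dist (leg2 p q z s1) (leg2 p q z s2) <= `|s1 - s2|.
Proof.
wlog le12 : s1 s2 / s1 <= s2.
  move=> W s10 s20; case: (boolP (s1 <= s2)) => h; first exact: W.
  rewrite -ltNge in h.
  by rewrite dist_sym distrC; exact: (W s2 s1 (ltW h) s20 s10).
move=> s10 s20; set L := dist p q.
have L0 : 0 <= L := dist_ge0 p q.
have [h1|h1] := lerP s1 L; have [h2|h2] := lerP s2 L.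
- by rewrite !leg2_le //; exact: seg_lip.
- rewrite (leg2_le _ h1) (leg2_ge _ (ltW h2)) -/L (normBr le12).
  have := dist_tri (seg p q s1) q (seg q z (s2 - L)).
  have := seg_to_end s10 h1.
  have h2' : 0 <= s2 - L by lra.
  have := seg_from_start q z h2'.
  rewrite -/L; lra.
- lra.
- rewrite (leg2_ge _ (ltW h1)) (leg2_ge _ (ltW h2)) -/L.
  have h1' : 0 <= s1 - L by lra.
  have h2' : 0 <= s2 - L by lra.
  have e : s1 - s2 = s1 - L - (s2 - L) by ring.
  by rewrite e; exact: (seg_lip q z h1' h2').
Qed.

Lemma pick_ub (A : online_alg R) (t s0 B : R) :
  (forall s1 s2, 0 <= s1 -> 0 <= s2 -> dist (search A s1) (search A s2) <= `|s1 - s2|) ->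
  (forall tau r, after A tau r = seg (search A tau) (ptT R) r) ->
  0 <= s0 -> search A s0 = pkg t s0 ->
  (forall s, 0 <= s -> s <= s0 -> s + dist (search A s) (ptT R) <= B) ->
  (delivery A t <= B%:E)%E.
Proof.
move=> lip haf s00 gs0 hB.
have [s hp ss0] := exists_pickup lip s00 gs0.
have [s0' _ _] := hp.
apply: le_trans (deliv_ub hp (dist_ge0 (search A s) (ptT R)) _) _.
  by rewrite haf seg_L.
by rewrite lee_fin; exact: hB.
Qed.

End Paths.

Section Algs.
Variables (R : realType) (x y : R).
Local Notation P := ((x, y) : pt R).

Lemma after_seg (g : R -> pt R) tau r : to_T g tau r = seg (g tau) (ptT R) r.
Proof. by []. Qed.

Lemma DS : dist P (ptS R) = D x y 0.
Proof. by []. Qed.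

Lemma DT : dist P (ptT R) = D x y 1.
Proof. by []. Qed.

Lemma distST : dist (ptS R) (ptT R) = 1.
Proof. by rewrite /ptS /ptT dist_axis sub0r normrN normr1. Qed.

Lemma seg_ST t : 0 <= t -> t <= 1 -> seg (ptS R) (ptT R) t = (t, 0).
Proof.
move=> t0 t1; rewrite /seg distST t1 /ptS /ptT /= invr1 mulr1 !subr0 mulr1 mulr0 !add0r.
by [].
Qed.

Lemma seg_TS t : 0 <= t -> t <= 1 -> seg (ptT R) (ptS R) t = (1 - t, 0).
Proof.
move=> t0 t1; rewrite /seg dist_sym distST t1 /ptS /ptT /= invr1 mulr1.
by congr (_, _); ring.
Qed.

Lemma alg0_ub t : 0 <= t -> t <= 1 -> (delivery (alg0 P) t <= (D x y 0 + 1)%:E)%E.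
Proof.
move=> t0 t1; have p0 := D_ge0 x y 0.
apply: (@pick_ub _ _ t (D x y 0 + t)).
- by move=> s1 s2; exact: leg2_lip.
- by [].
- lra.
- rewrite /= leg2_ge DS; last by lra.
  have -> : D x y 0 + t - D x y 0 = t by ring.
  by rewrite seg_ST // pkg_ge //; lra.
move=> s s0 ss0 /=.
have [h|h] := lerP s (D x y 0).
  rewrite leg2_le ?DS //.
  have := dist_tri (seg P (ptS R) s) (ptS R) (ptT R).
  have h' : s <= dist P (ptS R) by rewrite DS.
  have := seg_to_end s0 h'.
  rewrite distST DS; lra.
rewrite leg2_ge DS; last by rewrite ltW.
have hr0 : 0 <= s - D x y 0 by lra.
have hr1 : s - D x y 0 <= dist (ptS R) (ptT R) by rewrite distST; lra.
have := seg_to_end hr0 hr1.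
rewrite distST; lra.
Qed.

Lemma alg1_ub (hout : 1 < (x - 1) ^+ 2 + y ^+ 2) t : 0 <= t -> t <= 1 ->
  (delivery (alg1 P) t <= (D x y 1 + 2 - 2 * t)%:E)%E.
Proof.
move=> t0 t1; have q1 := out_q1 hout.
apply: (@pick_ub _ _ t (D x y 1 + 1 - t)).
- by move=> s1 s2; exact: leg2_lip.
- by [].
- lra.
- rewrite /= leg2_ge DT; last by lra.
  have -> : D x y 1 + 1 - t - D x y 1 = 1 - t by ring.
  rewrite seg_TS; [|lra|lra].
  rewrite pkg_ge; last by lra.
  by congr (_, _); ring.
move=> s s0 ss0 /=.
have [h|h] := lerP s (D x y 1).
  rewrite leg2_le ?DT //.
  have h' : s <= dist P (ptT R) by rewrite DT.
  have := seg_to_end s0 h'.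
  rewrite DT; lra.
rewrite leg2_ge DT; last by rewrite ltW.
have hr0 : 0 <= s - D x y 1 by lra.
have := seg_from_start (ptT R) (ptS R) hr0.
rewrite dist_sym; lra.
Qed.

Lemma algd_ub1 (hP : (x, y) != (0, 0)) (hin : (x - 1) ^+ 2 + y ^+ 2 <= 1) t :
  dpoint P <= t -> t <= 1 -> (delivery (algd P) t <= 1%:E)%E.
Proof.
move=> dt t1; have d0 := d_pos hP hin; have Dd := in_Dd hP hin.
apply: (@pick_ub _ _ t (dpoint P)).
- by move=> s1 s2; exact: leg2_lip.
- by [].
- lra.
- rewrite /= leg2_le; last by rewrite -/(D x y (dpoint P)) Dd.
  have e := seg_L P (dpoint P, 0).
  rewrite -/(D x y (dpoint P)) Dd in e.
  by rewrite e pkg_le.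
move=> s s0 ss0 /=.
rewrite leg2_le; last by rewrite -/(D x y (dpoint P)) Dd.
have := dist_tri (seg P (dpoint P, 0) s) (dpoint P, 0) (ptT R).
have h : s <= dist P (dpoint P, 0) by rewrite -/(D x y (dpoint P)) Dd.
have := seg_to_end s0 h.
have d1 := d_le1 hP hin.
rewrite /ptT dist_axis normBr // -/(D x y (dpoint P)) Dd; lra.
Qed.

Lemma algd_ub2 (hP : (x, y) != (0, 0)) (hin : (x - 1) ^+ 2 + y ^+ 2 <= 1) t :
  0 <= t -> t < dpoint P ->
  (delivery (algd P) t <= (2 * dpoint P + 1 - 2 * t)%:E)%E.
Proof.
move=> t0 td; have d0 := d_pos hP hin; have Dd := in_Dd hP hin.
have d1 := d_le1 hP hin.
set d := dpoint P in td d0 Dd d1 *.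
have LQ : dist P (d, 0) = d by [].
have QS : dist (d, 0) (ptS R) = d by rewrite /ptS dist_axis subr0 gtr0_norm.
have QT : dist (d, 0) (ptT R) = 1 - d by rewrite /ptT dist_axis normBr.
apply: (@pick_ub _ _ t (2 * d - t)).
- by move=> s1 s2; exact: leg2_lip.
- by [].
- lra.
- rewrite /= leg2_ge LQ; last by lra.
  rewrite /seg QS ifT; last by lra.
  rewrite pkg_ge /ptS /=; last by lra.
  congr (_, _); last by ring.
  rewrite -/d; move: d0; clearbody d => d0.
  by field; rewrite gt_eqF.
move=> s s0 ss0 /=.
have [h|h] := lerP s d.
  rewrite leg2_le ?LQ //.
  have := dist_tri (seg P (d, 0) s) (d, 0) (ptT R).
  have h' : s <= dist P (d, 0) by rewrite LQ.
  have := seg_to_end s0 h'.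
  rewrite QT LQ; lra.
rewrite leg2_ge LQ; last by lra.
have hr0 : 0 <= s - d by lra.
have k1 := seg_from_start (d, 0) (ptS R) hr0.
have k2 := dist_tri (seg (d, 0) (ptS R) (s - d)) (d, 0) (ptT R).
rewrite QT (dist_sym (seg _ _ _) (d, 0)) in k2; lra.
Qed.

End Algs.

Section Final.
Variable R : realType.

Lemma cross_le (a b K1 K2 : R) : 0 < K1 -> 0 < K2 -> a * K2 <= b * K1 -> a / K1 <= b / K2.
Proof. by move=> k1 k2 h; rewrite ler_pdivrMr // mulrAC ler_pdivlMr. Qed.

Lemma fin_core (N Kt Ku S e a b : R) : 0 < Kt -> 1 <= Ku -> 0 <= e ->
  N <= Kt + a -> Ku - e <= S -> a * Ku <= b * Kt -> N / Kt - e <= (S + b) / Ku.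
Proof.
move=> kt ku e0 hN hS hab.
have ku0 : 0 < Ku by lra.
have h1 : N / Kt <= 1 + a / Kt.
  have -> : 1 + a / Kt = (Kt + a) / Kt by field; rewrite gt_eqF.
  by apply: ler_wpM2r; [rewrite invr_ge0 ltW|].
have h2 : a / Kt <= b / Ku by apply: cross_le.
have h3 : (Ku - e + b) / Ku <= (S + b) / Ku.
  by apply: ler_wpM2r; [rewrite invr_ge0 ltW|lra].
have h4 : (Ku - e + b) / Ku = 1 - e / Ku + b / Ku by field; rewrite gt_eqF.
have h5 : e / Ku <= e by rewrite ler_pdivrMr //; nra.
lra.
Qed.

Variables (x y : R).
Local Notation P := ((x, y) : pt R).
Local Notation D := (D x y).

Lemma out_final (hP : (x, y) != (0, 0)) (hout : 1 < (x - 1) ^+ 2 + y ^+ 2) u t S e :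
  0 <= u -> u <= t -> t <= 1 -> 0 <= e -> D u + 1 - u - e <= S ->
  (D 1 + 2 - 2 * t) / (D t + 1 - t) - e <= (S + 2 - 2 * u) / (D u + 1 - u).
Proof.
move=> u0 ut t1 e0 hS.
have Du := out_D hP hout u0 (le_trans ut t1).
have Dt := out_D hP hout (le_trans u0 ut) t1.
have hm := out_mono hout u0 ut t1.
have hl := D_lip x y t 1; rewrite normBl // in hl.
have -> : S + 2 - 2 * u = S + (2 - 2 * u) by ring.
by apply: (fin_core (a := 2 * (1 - t))); try lra; nra.
Qed.

Lemma in_final (hP : (x, y) != (0, 0)) (hin : (x - 1) ^+ 2 + y ^+ 2 <= 1) u t S e :
  0 <= u -> u <= t -> t < dpoint P -> 0 <= e -> D u + 1 - u - e <= S ->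
  (2 * dpoint P + 1 - 2 * t) / (D t + 1 - t) - e <= (S + 2 - 2 * u) / (D u + 1 - u).
Proof.
move=> u0 ut td e0 hS.
have d1 := d_le1 hP hin.
have Du := in_D_lt hP hin u0 (le_lt_trans ut td).
have Dt := in_D_lt hP hin (le_trans u0 ut) td.
have hm := in_mono hP hin u0 ut (ltW td).
have -> : S + 2 - 2 * u = S + (2 - 2 * u) by ring.
have k : (dpoint P - t) * (1 - u) <= (1 - u) * (1 - t) by nra.
by apply: (fin_core (a := 2 * (dpoint P - t))); try lra; nra.
Qed.

End Final.

Section Main.
Variables (R : realType) (x y : R) (A : online_alg R).
Hypothesis hv : valid_alg (x, y) A.
Local Notation g := (search A).
Local Notation P := ((x, y) : pt R).
Local Notation D := (D x y).
Local Open Scope classical_set_scope.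

Lemma ratio_ge (t L : R) : 0 <= t <= 1 ->
  (forall s, is_pickup g t s -> L <= s + dist (g s) (ptT R)) ->
  ((L / Opt P t)%:E <= cr P A)%E.
Proof.
move=> ht h; apply: le_trans (@cr_lb _ P A t ht).
by apply: ratio_lb; [exact: Opt_gt0 | exact: (deliv_ge hv)].
Qed.

Lemma c_ge1 : (1%:E <= cr P A)%E.
Proof.
have h1 : (0 <= (1:R)) && (1 <= (1:R)) by rewrite ler01 lexx.
have := @ratio_ge 1 (Opt P 1) h1.
rewrite divff ?gt_eqF ?Opt_gt0 //; apply => s hp.
have [s0 _ _] := hp.
rewrite Opt1 ge_max; apply/andP; split.
  have [h|h] := lerP 1 s.
    by rewrite (pick_at hp h) distT subrr normr0 addr0.
  rewrite (pick1_pos hp h) distT (normBr (ltW h)); lra.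
have := v_start hv s0; have := dist_tri P (g s) (ptT R); rewrite -/(D 1) /D; lra.
Qed.

Lemma no0V s1 s' : is_pickup g 1 s1 -> g s1 = ptT R -> s1 < D 0 + 1 ->
  0 <= s' -> s' < s1 -> g s' <> (0, 0).
Proof.
move=> hp1 hT hlt s0 ss e.
have e' : g s' = pkg 0 s' by rewrite e pkg_ge.
have [a hpa als] := exists_pickup (v_lip hv) s0 e'.
have := sc0 hv hp1 hT hlt hpa; lra.
Qed.

Lemma ratio_notV s1 u : is_pickup g 1 s1 -> g s1 = ptT R -> 0 <= u -> u < 1 ->
  (forall s', 0 <= s' -> s' < s1 -> g s' <> (u, 0)) ->
  (((s1 + 2 - 2 * u) / Opt P u)%:E <= cr P A)%E.
Proof.
move=> hp1 hT u0 u1 hV.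
have hu : 0 <= u <= 1 by rewrite u0 ltW.
apply: ratio_ge => // s hp.
have := sc_after hv hp1 hT u0 u1 hp hV => h.
have us : u <= s by have := pick1_ge1 hp1 hT; lra.
rewrite (pick_at hp us) distT (normBr (ltW u1)); lra.
Qed.

Lemma V_arg s1 t Targ : is_pickup g 1 s1 -> g s1 = ptT R -> s1 < D 0 + 1 ->
  0 <= t -> t < 1 ->
  Targ <= (s1 + 2 - 2 * t) / Opt P t ->
  (forall u e, 0 <= u -> u <= t -> 0 <= e -> D u + 1 - u - e <= s1 ->
     Targ - e <= (s1 + 2 - 2 * u) / Opt P u) ->
  (Targ%:E <= cr P A)%E.
Proof.
move=> hp1 hT hlt t0 t1 hdir hfin.
have [s10 _ _] := hp1.
case: (pselect (exists s', [/\ 0 <= s', s' < s1 & g s' = (t, 0)])); last first.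
  move=> nV; apply: le_trans (ratio_notV hp1 hT t0 t1 _); first by rewrite lee_fin.
  by move=> s' h1 h2 e; apply: nV; exists s'.
move=> [s' [s'0 s's gs']].
pose V := [set w : R | (0 <= w /\ w <= 1) /\
   exists s'', [/\ 0 <= s'', s'' < s1 & g s'' = (w, 0)]].
have Vt : V t by split; [split; lra | exists s'].
have V0 : V !=set0 by exists t.
have lbV : lbound V 0 by move=> w [[]].
have hinf : has_inf V by split => //; exists 0.
set v0 := inf V.
have v00 : 0 <= v0 by exact: lb_le_inf.
have vle : forall w, V w -> v0 <= w by move=> w Vw; exact: (ge_inf (proj2 hinf)).
have v0t : v0 <= t by exact: vle.
apply: eps_close => e e0.
have e4 : 0 < e / 4 by rewrite divr_gt0.
have [w [[w0 w1] [s'' [s''0 s''s gs'']]] wlt] := inf_adherent e4 hinf.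
rewrite -/v0 in wlt.
have v0w : v0 <= w by apply: vle; split; [split|exists s''].
have Kw : D w + 1 - w <= s1 by exact: (V_bound hv hT s''0 s''s gs'' w1).
have [u [u0 uv0 wu hu]] : exists u, [/\ 0 <= u, u <= v0, w - u <= e / 2 &
    forall s3, 0 <= s3 -> s3 < s1 -> g s3 <> (u, 0)].
  have [hc|hc] := lerP (v0 - e / 4) 0.
    exists 0; split => //; first by lra.
    by move=> s3 h1 h2; exact: no0V hp1 hT hlt h1 h2.
  exists (v0 - e / 4); split; [lra|lra|lra|].
  move=> s3 h1 h2 e3.
  have : V (v0 - e / 4) by split; [split; lra | exists s3].
  by move/vle; lra.
have u1 : u < 1 by lra.
have Ku : D u + 1 - u - e <= s1.
  have uw : u <= w by lra.
  have := D_lip x y w u; rewrite (normBr uw); lra.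
apply: le_trans (ratio_notV hp1 hT u0 u1 hu).
by rewrite lee_fin; apply: hfin => //; [lra|lra].
Qed.

End Main.

Section Hyb.
Variables (R : realType) (x y : R).
Local Notation P := ((x, y) : pt R).

Lemma hyb0 : (cr P (hybrid P) <= cr P (alg0 P))%E.
Proof.
rewrite /hybrid; case: ifP => _; case: ifP => h //.
  by move/negbT: h; rewrite -ltNge => /ltW.
by move/negbT: h; rewrite -ltNge => /ltW.
Qed.

Lemma hyb1 : 1 < (x - 1) ^+ 2 + y ^+ 2 -> (cr P (hybrid P) <= cr P (alg1 P))%E.
Proof. by move=> h; rewrite /hybrid /= h; case: ifP. Qed.

Lemma hybd : (x - 1) ^+ 2 + y ^+ 2 <= 1 -> (cr P (hybrid P) <= cr P (algd P))%E.
Proof. by move=> h; rewrite /hybrid /= ltNge h /=; case: ifP. Qed.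

End Hyb.

Lemma div_mono (R : realType) (a b K : R) : 0 < K -> a <= b -> a / K <= b / K.
Proof. by move=> k h; apply: ler_wpM2r; [rewrite invr_ge0 ltW|]. Qed.

Unset Implicit Arguments.

Theorem theorem4 (R : realType) (x y : R) :
  0 <= y -> (x, y) != (0, 0) ->
  forall A : online_alg R, valid_alg (x, y) A ->
  (cr (x, y) (hybrid (x, y)) <= cr (x, y) A)%E.
Proof.
move=> hy hP A hv.
set p := D x y 0; set q := D x y 1.
have p0 : 0 <= p := D_ge0 x y 0.
have mq0 : 0 < Num.max 1 q by rewrite lt_max ltr01.
set U0 := (p + 1) / Num.max 1 q.
have cr0 : (cr (x, y) (alg0 (x, y)) <= U0%:E)%E.
  apply: cr_ub => t /andP [t0 t1].
  apply: le_trans (ratio_ub (Opt_gt0 (x, y) t) (alg0_ub x y t0 t1)) _.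
  rewrite lee_fin; apply: cross_le => //; first exact: Opt_gt0.
  have hO := Opt_ge x y t0 t1; have h0 := D_ge0 x y 0; apply: ler_wpM2l => //; lra.
have [hU|hU] := leP (U0%:E) (cr (x, y) A).
  exact: le_trans (hyb0 x y) (le_trans cr0 hU).
have A1lt : (delivery A 1 < (p + 1)%:E)%E.
  rewrite ltNge; apply/negP => h.
  have h1 : (0 <= (1:R)) && (1 <= (1:R)) by rewrite ler01 lexx.
  have := le_trans (ratio_lb (Opt_gt0 (x, y) 1) h) (@cr_lb _ (x, y) A 1 h1).
  by rewrite Opt1 -/q -/U0; move/(lt_le_trans hU); rewrite ltxx.
have [_ [s1 [r [hp1 r0 ha ->]]]] := ereal_inf_lt A1lt.
rewrite lte_fin => hlt'.
have hlt : s1 < D x y 0 + 1 by rewrite -/p; lra.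
have [s10 gs1 _] := hp1.
have [hout|hin] := ltrP 1 ((x - 1) ^+ 2 + y ^+ 2).
-
  apply: le_trans (hyb1 hout) _.
  have s11 : 1 <= s1.
    rewrite leNgt; apply/negP => h.
    have := v_start hv s10; rewrite (pick1_pos hp1 h) -/(D x y s1) => h2.
    by have := out_D hP hout s10 (ltW h); lra.
  have hT := pick_at hp1 s11.
  have q1 := out_q1 hout.
  have qs1 : q <= s1 by have := v_start hv s10; rewrite hT.
  apply: cr_ub => t /andP [t0 t1].
  apply: le_trans (ratio_ub (Opt_gt0 (x, y) t) (alg1_ub hout t0 t1)) _.
  have Dt := out_D hP hout t0 t1.
  rewrite (Opt_K (ltW Dt)).
  have [te|tl] := eqVneq t 1.
    have q0 : 0 < D x y 1 by have := out_q1 hout; lra.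
    by rewrite te mulr1 !addrK divff ?(gt_eqF q0) //; exact: c_ge1 hv.
  have tl1 : t < 1 by rewrite lt_neqAle tl t1.
  apply: (V_arg hv hp1 hT hlt t0 tl1).
    rewrite (Opt_K (ltW Dt)); apply: div_mono; first by lra.
    by rewrite -/q; lra.
  move=> u e u0 ut e0 hS.
  have Du := out_D hP hout u0 (le_trans ut t1).
  rewrite (Opt_K (ltW Du)).
  exact: (out_final hP hout u0 ut t1 e0 hS).
-
  apply: le_trans (hybd hin) _.
  have d0 := d_pos hP hin; have d1 := d_le1 hP hin.
  apply: cr_ub => t /andP [t0 t1].
  have [dt|dt] := lerP (dpoint (x, y)) t.
    apply: le_trans (ratio_ub (Opt_gt0 (x, y) t) (algd_ub1 hP hin dt t1)) _.
    apply: le_trans (c_ge1 hv); rewrite lee_fin ler_pdivrMr ?Opt_gt0 // mul1r.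
    exact: Opt_ge1.
  apply: le_trans (ratio_ub (Opt_gt0 (x, y) t) (algd_ub2 hP hin t0 dt)) _.
  have Dt := in_D_lt hP hin t0 dt.
  rewrite (Opt_K (ltW Dt)).
  have [s11|s11] := lerP 1 s1.
    have hT := pick_at hp1 s11.
    have tl1 : t < 1 by lra.
    apply: (V_arg hv hp1 hT hlt t0 tl1).
      rewrite (Opt_K (ltW Dt)); apply: div_mono; first by lra.
      lra.
    move=> u e u0 ut e0 hS.
    have Du := in_D_lt hP hin u0 (le_lt_trans ut dt).
    rewrite (Opt_K (ltW Du)).
    exact: (in_final hP hin u0 ut dt e0 hS).
  have g1 := pick1_pos hp1 s11.
  have ds1 : dpoint (x, y) <= s1.
    apply: (in_D_ge hP hin s10); have := v_start hv s10; rewrite g1.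
    by rewrite -/(D x y s1).
  have ht : (0 <= t) && (t <= 1) by rewrite t0 t1.
  rewrite -(Opt_K (ltW Dt)).
  apply: (ratio_ge hv ht) => s hp.
  have := sc_inter hv hp1 s11 t0 Dt (lt_le_trans dt ds1) hp => h.
  have ts : t <= s by lra.
  rewrite (pick_at hp ts) distT normBr; lra.
Qed.
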